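(* Let $f\colon V_0\to\mathbb{R}$ be continuous such that $\Gamma_f$ is a ruled surface. Let $R_1,R_2$ be distinct rulings of $\Gamma_f$ with $w_z(R_1)<w_z(R_2)$. Then $g_{R_1}(x)\le g_{R_2}(x)$ for all $x\in\mathbb{R}$ and $m(R_1)\ge m(R_2)$.
   Context: $\mathbb{H}$ is $\mathbb{R}^3$ with product $(x,y,z)\cdot(x',y',z')=(x+x',y+y',z+z'+\frac{xy'-yx'}{2})$; $X=(1,0,0)$, $Y=(0,1,0)$, $v^t=tv$. A horizontal line is $\{p\cdot tv\}$ with $v=(a,b,0)\ne0$, slope $b/a$; a ruled surface is a union of horizontal line segments (rulings) with endpoints in its boundary; since $\Gamma_f$ is entire, its rulings are horizontal lines, each of the form $\{w\cdot(X+mY)^t:t\in\mathbb{R}\}$. $V_0=\{(x,0,z)\}$, $\Gamma_f=\{u\cdot Y^{f(u)}:u\in V_0\}$, $\Pi(x,y,z)=(x,0,z-\frac{xy}2)$. For a ruling $R$: $m(R)$ is its slope, $w(R)=(0,w_y(R),w_z(R))$ is its intersection with the $yz$-plane, and $g_R(x)=w_z(R)-w_y(R)x-\frac{m(R)}2x^2$, so that $\Pi(R)=\{(x,0,g_R(x)):x\in\mathbb{R}\}$. *)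

(* Defs.v *)
From Stdlib Require Import Reals.
From Coquelicot Require Import Coquelicot.
Open Scope R_scope.

Definition Hpt := (R * R * R)%type.

Definition hmul (p q : Hpt) : Hpt :=
  let '(x, y, z) := p in let '(x', y', z') := q in
  (x + x', y + y', z + z' + (x * y' - y * x') / 2).

Definition hpow (v : Hpt) (t : R) : Hpt :=
  let '(a, b, c) := v in (t * a, t * b, t * c).

Definition hX : Hpt := (1, 0, 0).
Definition hY : Hpt := (0, 1, 0).

Definition V0pt (u : R * R) : Hpt := (fst u, 0, snd u).

(* Intrinsic graph Gamma_f = { u . Y^{f(u)} : u in V_0 }, with f : V_0 -> R
   represented as a function of (x,z). *)
Definition Gamma (f : R * R -> R) (q : Hpt) : Prop :=
  exists u : R * R, q = hmul (V0pt u) (hpow hY (f u)).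

Definition horizontal_vec (v : Hpt) : Prop :=
  let '(a, b, c) := v in c = 0 /\ (a <> 0 \/ b <> 0).

Definition hline (p v : Hpt) (q : Hpt) : Prop :=
  exists t : R, q = hmul p (hpow v t).

Definition is_ruling (f : R * R -> R) (L : Hpt -> Prop) : Prop :=
  exists p v : Hpt, horizontal_vec v /\
    (forall q, L q <-> hline p v q) /\ (forall q, L q -> Gamma f q).

Definition ruled (f : R * R -> R) : Prop :=
  forall q, Gamma f q -> exists L, is_ruling f L /\ L q.

Definition ruling_line (wy wz m : R) : Hpt -> Prop :=
  hline (0, wy, wz) (1, m, 0).

Definition gR (wy wz m x : R) : R := wz - wy * x - m / 2 * x ^ 2.

(* Main.v *)
Require Import Defs.
From Stdlib Require Import Reals Lra Psatz.
From Coquelicot Require Import Coquelicot.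
Open Scope R_scope.

Lemma on_graph f wy wz m L (HR : is_ruling f L)
  (E : forall q, L q <-> ruling_line wy wz m q) :
  forall t, f (t, gR wy wz m t) = wy + t * m.
Proof.
  intro t. destruct HR as (p & v & _ & _ & HG).
  assert (HL : L (t, wy + t*m, wz - wy * t / 2)).
  { apply E. exists t. unfold hmul, hpow. f_equal; [f_equal|]; lra. }
  destruct (HG _ HL) as [[u1 u2] Hu].
  unfold hmul, hpow, V0pt in Hu; simpl in Hu.
  injection Hu; intros H3 H2 H1.
  assert (Ht : u1 = t) by lra. subst u1. unfold gR.
  assert (Hf : f (t, u2) = wy + t * m) by lra.
  replace (wz - wy * t - m / 2 * t ^ 2) with u2 by (rewrite Hf in H3; simpl; nra). exact Hf.
Qed.

Lemma quad (a b c : R) (Hc : 0 < c)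
  (T : forall x, c + b * x + a * x ^ 2 = 0 -> b + 2 * a * x = 0) :
  (forall x, 0 <= c + b * x + a * x ^ 2) /\ 0 <= a.
Proof.
  destruct (Req_dec a 0) as [Ha|Ha].
  - subst a. destruct (Req_dec b 0) as [Hb|Hb].
    + subst b. split; [intro; lra | lra].
    + exfalso. specialize (T (- c / b)).
      assert (c + b * (- c / b) + 0 * (- c / b) ^ 2 = 0) by (field; auto).
      apply T in H. lra.
  - set (D := b * b - 4 * a * c).
    destruct (Rle_lt_dec 0 D) as [HD|HD].
    + set (r := (- b + sqrt D) / (2 * a)).
      assert (Hs : sqrt D * sqrt D = D) by (apply sqrt_sqrt; lra).
      assert (Hr : c + b * r + a * r ^ 2 = 0).
      { unfold r. simpl. field_simplify; [|auto].
        replace (sqrt D ^ 2) with D by (simpl; lra). unfold D. field. auto. }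
      apply T in Hr.
      assert (HsD : sqrt D = 0).
      { assert (E2r : 2 * a * r = - b + sqrt D) by (unfold r; field; auto). lra. }
      assert (HD0 : D = 0) by nra. clearbody r.
      assert (Hb : b = - 2 * a * r) by lra.
      assert (Ha2 : c = a * r ^ 2) by (unfold D in HD0; rewrite Hb in HD0; simpl in HD0; nra).
      assert (0 < a) by (simpl in Ha2; nra).
      split; [|lra]. intro x.
      replace (c + b * x + a * x ^ 2) with (a * ((x - r) * (x - r))) by (rewrite Ha2, Hb; ring).
      apply Rmult_le_pos; [lra|]. apply Rle_0_sqr.
    + assert (Hk : forall x, 4 * a * (c + b * x + a * x ^ 2) = (2*a*x+b)^2 - D)
        by (intro; unfold D; ring).
      assert (0 < a).
      { specialize (Hk 0). assert (0 < 4 * a * c) by (simpl in Hk; nra). nra. }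
      split; [|lra]. intro x. specialize (Hk x).
      assert (0 < (2*a*x+b)^2 - D) by (pose proof (pow2_ge_0 (2*a*x+b)); lra).
      assert (0 < 4 * a) by lra.
      assert (0 < c + b * x + a * x ^ 2); [|lra].
      apply (Rmult_lt_reg_l (4 * a)); lra.
Qed.

Theorem lemma4p2 (f : R * R -> R)
  (Hcont : forall u : R * R, continuous f u)
  (Hruled : ruled f)
  (R1 R2 : Hpt -> Prop) (wy1 wz1 m1 wy2 wz2 m2 : R)
  (HR1 : is_ruling f R1) (HR2 : is_ruling f R2)
  (E1 : forall q, R1 q <-> ruling_line wy1 wz1 m1 q)
  (E2 : forall q, R2 q <-> ruling_line wy2 wz2 m2 q)
  (Hdist : exists q, ~ (R1 q <-> R2 q))
  (Hz : wz1 < wz2) :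
  (forall x : R, gR wy1 wz1 m1 x <= gR wy2 wz2 m2 x) /\ m1 >= m2.
Proof.
  pose proof (on_graph _ _ _ _ _ HR1 E1) as G1.
  pose proof (on_graph _ _ _ _ _ HR2 E2) as G2.
  destruct (quad ((m1 - m2)/2) (wy1 - wy2) (wz2 - wz1)) as [H1 H2]; [lra| |].
  - intros x Hx.
    assert (Heq : gR wy1 wz1 m1 x = gR wy2 wz2 m2 x) by (unfold gR; lra).
    pose proof (G1 x) as A. rewrite Heq, G2 in A. lra.
  - split; [|lra]. intro x. specialize (H1 x). unfold gR. lra.
Qed.
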